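(* Let $1\le n\le N$, $k\ge0$, $E\in\mathbb R$, $\mathbf u\in\mathbb Z^{nd}$ and $\kappa(n)=n^n$. If $M(\mathbf C^{(n)}_{L_{k+1}}(\mathbf u),E)\ge\kappa(n)+2$, then $M^{\mathrm{sep}}(\mathbf C^{(n)}_{L_{k+1}}(\mathbf u),E)\ge2$. Similarly, if $M_{\mathrm{PI}}(\mathbf C^{(n)}_{L_{k+1}}(\mathbf u),E)\ge\kappa(n)+2$, then $M^{\mathrm{sep}}_{\mathrm{PI}}(\mathbf C^{(n)}_{L_{k+1}}(\mathbf u),E)\ge2$.
   Context: Max-norm cubes $\mathbf C^{(n)}_L(\mathbf u)=\{\mathbf x\in\mathbb R^{nd}:|\mathbf x-\mathbf u|<L\}$, $\mathbf u\in\mathbb Z^{nd}$. Scales $L_0>3$, $L_k=\lfloor L_{k-1}^{3/2}\rfloor+1$. Given $m>0$, ''$(E,m)$-singular'' refers to a fixed property of cubes (failure of the resolvent decay bound $\|\mathbf 1_{\mathbf C^{(n,out)}_L}\mathbf G^{(n)}_{\mathbf C^{(n)}_L}(E)\mathbf 1_{\mathbf C^{(n,int)}_L}\|\le e^{-\gamma(m,L,n)L}$ or $E\in\sigma$); only the counting structure matters here. Separability: $\mathbf C^{(n)}_L(\mathbf x)$ is $\mathcal J$-separable from $\mathbf C^{(n)}_L(\mathbf y)$ if $\emptyset\ne\mathcal J\subset\{1,..,n\}$ and $\bigcup_{j\in\mathcal J}C^{(1)}_L(x_j)$ is disjoint from $\bigcup_{j\notin\mathcal J}C^{(1)}_L(x_j)\cup\bigcup_jC^{(1)}_L(y_j)$;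 a pair is separable if $|\mathbf x-\mathbf y|>7NL$ and one is $\mathcal J$-separable from the other. A cube is partially interactive (PI) if $\max_{i\ne j}|u_i-u_j|>n(2L+r_0)$. Counts: $M(\mathbf C^{(n)}_{L_{k+1}}(\mathbf u),E)$ is the maximal number of $(E,m)$-singular cubes $\mathbf C^{(n)}_{L_k}(\mathbf u^{(j)})\subset\mathbf C^{(n)}_{L_{k+1}}(\mathbf u)$ with $\mathbf u^{(j)}\in\mathbb Z^{nd}$, $\operatorname{dist}(\mathbf u^{(j)},\partial\mathbf C^{(n)}_{L_{k+1}}(\mathbf u))\ge2L_k$ and $|\mathbf u^{(j)}-\mathbf u^{(j')}|>7NL_k$ for $j\ne j'$; $M^{\mathrm{sep}}$ is the maximal number of pairwise separable $(E,m)$-singular cubes $\mathbf C^{(n)}_{L_k}(\mathbf u^{(j)})\subset\mathbf C^{(n)}_{L_{k+1}}(\mathbf u)$; $M_{\mathrm{PI}}$ is the maximal number of $(E,m)$-singular PI cubes $\mathbf C^{(n)}_{L_k}(\mathbf u^{(j)})\subset\mathbf C^{(n)}_{L_{k+1}}(\mathbf u)$ with $|\mathbf u^{(j)}-\mathbf u^{(j')}|>7NL_k$ for $j\ne j'$; $M^{\mathrm{sep}}_{\mathrm{PI}}$ is the maximal number of pairwise separable $(E,m)$-singular PI cubes $\mathbf C^{(n)}_{L_k}(\mathbf u^{(j)})\subset\mathbf C^{(n)}_{L_{k+1}}(\mathbf u)$. *)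

(* Defs.v *)
From Stdlib Require Import Reals ZArith Arith.
Open Scope R_scope.

(* A configuration u in Z^{nd}: u j i is the i-th coordinate (i < d) of
   particle j (j < n).  Points of R^{nd} are encoded likewise. *)
Definition config := nat -> nat -> Z.
Definition point := nat -> nat -> R.

Definition zr (u : config) : point := fun j i => IZR (u j i).

(* max over indices 0..m-1 (0 for the empty range; used on nonnegative values) *)
Fixpoint maxi (m : nat) (f : nat -> R) : R :=
  match m with
  | O => 0
  | S m' => Rmax (maxi m' f) (f m')
  end.

Definition norm1 (d : nat) (v : nat -> R) : R := maxi d (fun i => Rabs (v i)).
Definition normn (n d : nat) (x : point) : R := maxi n (fun j => norm1 d (x j)).

Definition diffp (x y : point) : point := fun j i => x j i - y j i.

Definition cube (n d : nat) (L : R) (u : point) (x : point) : Prop :=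
  normn n d (diffp x u) < L.

Definition cube1 (d : nat) (L : R) (a z : nat -> R) : Prop :=
  norm1 d (fun i => z i - a i) < L.

Definition bdry (n d : nat) (L : R) (u : point) (x : point) : Prop :=
  normn n d (diffp x u) = L.

Definition dist_bdry_ge (n d : nat) (L : R) (u v : point) (r : R) : Prop :=
  forall y, bdry n d L u y -> r <= normn n d (diffp y v).

Definition cube_sub (n d : nat) (L1 : R) (v : point) (L2 : R) (u : point) : Prop :=
  forall x, cube n d L1 v x -> cube n d L2 u x.

Fixpoint scale (L0 : R) (k : nat) : R :=
  match k with
  | O => L0
  | S k' => IZR (Int_part (Rpower (scale L0 k') (3/2))) + 1
  end.

Definition kappa (n : nat) : nat := Nat.pow n n.

Definition Jsep (n d : nat) (L : R) (x y : config) (J : nat -> Prop) : Prop :=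
  (exists j, (j < n)%nat /\ J j) /\
  forall z : nat -> R,
    ~ ((exists j, (j < n)%nat /\ J j /\ cube1 d L (zr x j) z) /\
       ((exists j, (j < n)%nat /\ ~ J j /\ cube1 d L (zr x j) z) \/
        (exists j, (j < n)%nat /\ cube1 d L (zr y j) z))).

Definition sep_pair (N n d : nat) (L : R) (x y : config) : Prop :=
  normn n d (diffp (zr x) (zr y)) > 7 * INR N * L /\
  ((exists J, Jsep n d L x y J) \/ (exists J, Jsep n d L y x J)).

Definition PI (n d : nat) (r0 L : R) (u : config) : Prop :=
  exists i j, (i < n)%nat /\ (j < n)%nat /\ i <> j /\
    norm1 d (fun c => zr u i c - zr u j c) > INR n * (2 * L + r0).

(* The abstract "(E,m)-singular" property (m fixed): sing n E v L means the
   cube C^{(n)}_L(v) is (E,m)-singular. *)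
Definition singT := nat -> R -> config -> R -> Prop.

Definition M_ge (sing : singT) (N n d : nat) (L0 : R) (k : nat) (E : R)
    (u : config) (K : nat) : Prop :=
  exists f : nat -> config,
    (forall p, (p < K)%nat ->
       sing n E (f p) (scale L0 k) /\
       cube_sub n d (scale L0 k) (zr (f p)) (scale L0 (S k)) (zr u) /\
       dist_bdry_ge n d (scale L0 (S k)) (zr u) (zr (f p)) (2 * scale L0 k)) /\
    (forall p q, (p < K)%nat -> (q < K)%nat -> p <> q ->
       normn n d (diffp (zr (f p)) (zr (f q))) > 7 * INR N * scale L0 k).

Definition Msep_ge (sing : singT) (N n d : nat) (L0 : R) (k : nat) (E : R)
    (u : config) (K : nat) : Prop :=
  exists f : nat -> config,
    (forall p, (p < K)%nat ->
       sing n E (f p) (scale L0 k) /\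
       cube_sub n d (scale L0 k) (zr (f p)) (scale L0 (S k)) (zr u)) /\
    (forall p q, (p < K)%nat -> (q < K)%nat -> p <> q ->
       sep_pair N n d (scale L0 k) (f p) (f q)).

Definition MPI_ge (sing : singT) (N n d : nat) (r0 L0 : R) (k : nat) (E : R)
    (u : config) (K : nat) : Prop :=
  exists f : nat -> config,
    (forall p, (p < K)%nat ->
       sing n E (f p) (scale L0 k) /\ PI n d r0 (scale L0 k) (f p) /\
       cube_sub n d (scale L0 k) (zr (f p)) (scale L0 (S k)) (zr u)) /\
    (forall p q, (p < K)%nat -> (q < K)%nat -> p <> q ->
       normn n d (diffp (zr (f p)) (zr (f q))) > 7 * INR N * scale L0 k).

Definition MPIsep_ge (sing : singT) (N n d : nat) (r0 L0 : R) (k : nat) (E : R)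
    (u : config) (K : nat) : Prop :=
  exists f : nat -> config,
    (forall p, (p < K)%nat ->
       sing n E (f p) (scale L0 k) /\ PI n d r0 (scale L0 k) (f p) /\
       cube_sub n d (scale L0 k) (zr (f p)) (scale L0 (S k)) (zr u)) /\
    (forall p q, (p < K)%nat -> (q < K)%nat -> p <> q ->
       sep_pair N n d (scale L0 k) (f p) (f q)).

(* Main.v *)
Require Import Defs.
From Stdlib Require Import Reals ZArith Arith.
From Stdlib Require Import Lia Lra Classical IndefiniteDescription.
Open Scope R_scope.

Lemma maxi_nonneg m f : 0 <= maxi m f.
Proof. induction m; simpl; [lra|]. eapply Rle_trans; [exact IHm| apply Rmax_l]. Qed.

Lemma maxi_ge m f i : (i < m)%nat -> f i <= maxi m f.
Proof.
  induction m; intros H; [lia|]. simpl.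
  destruct (Nat.eq_dec i m) as [->|Hne]; [apply Rmax_r|].
  eapply Rle_trans; [apply IHm; lia| apply Rmax_l].
Qed.

Lemma maxi_le m f c : 0 <= c -> (forall i, (i < m)%nat -> f i <= c) -> maxi m f <= c.
Proof.
  induction m; intros Hc H; simpl; [lra|]. apply Rmax_lub; [apply IHm; auto|apply H; lia].
Qed.

Lemma maxi_lt m f c : 0 < c -> (forall i, (i < m)%nat -> f i < c) -> maxi m f < c.
Proof.
  induction m; intros Hc H; simpl; [lra|]. apply Rmax_lub_lt; [apply IHm; auto|apply H; lia].
Qed.

Definition Dn (d : nat) (a b : nat -> R) : R := norm1 d (fun i => a i - b i).

Lemma Dn_nonneg d a b : 0 <= Dn d a b.
Proof. apply maxi_nonneg. Qed.

Lemma Dn_tri d a b c : Dn d a c <= Dn d a b + Dn d b c.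
Proof.
  unfold Dn, norm1. apply maxi_le.
  - pose proof (maxi_nonneg d (fun i => Rabs (a i - b i))).
    pose proof (maxi_nonneg d (fun i => Rabs (b i - c i))). lra.
  - intros i Hi.
    pose proof (maxi_ge d (fun i => Rabs (a i - b i)) i Hi).
    pose proof (maxi_ge d (fun i => Rabs (b i - c i)) i Hi). cbv beta in *.
    replace (a i - c i) with ((a i - b i) + (b i - c i)) by ring.
    pose proof (Rabs_triang (a i - b i) (b i - c i)). lra.
Qed.

Lemma Dn_sym_le d a b : Dn d a b <= Dn d b a.
Proof.
  unfold Dn, norm1. apply maxi_le; [apply maxi_nonneg|].
  intros i Hi. rewrite Rabs_minus_sym.
  exact (maxi_ge d (fun i => Rabs (b i - a i)) i Hi).
Qed.

Lemma Dn_sym d a b : Dn d a b = Dn d b a.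
Proof. apply Rle_antisym; apply Dn_sym_le. Qed.

Lemma Dn_self d a : Dn d a a = 0.
Proof.
  apply Rle_antisym; [|apply Dn_nonneg].
  unfold Dn, norm1. apply maxi_le; [lra|]. intros i _.
  rewrite Rminus_diag, Rabs_R0. lra.
Qed.

Lemma overlap d L a b z : cube1 d L a z -> cube1 d L b z -> Dn d a b < 2 * L.
Proof.
  unfold cube1; intros Ha Hb.
  pose proof (Dn_tri d a z b). rewrite (Dn_sym d a z) in H.
  unfold Dn in *. lra.
Qed.

Lemma php K : forall g : nat -> nat, (forall p, (p <= K)%nat -> (g p < K)%nat) ->
  exists p q, (p < q <= K)%nat /\ g p = g q.
Proof.
  induction K; intros g Hg.
  - specialize (Hg 0%nat (le_n 0)); lia.
  - destruct (classic (exists p, (p <= K)%nat /\ g p = g (S K))) as [[p [Hp Heq]]|Hno].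
    + exists p, (S K); split; [lia|auto].
    + set (h := fun p => if Nat.eq_dec (g p) K then g (S K) else g p).
      destruct (IHK h) as [p [q [Hpq Hh]]].
      * intros p Hp. unfold h. destruct (Nat.eq_dec (g p) K) as [E|E].
        -- assert (g (S K) <> K) by (intro E2; apply Hno; exists p; split; [lia|congruence]).
           specialize (Hg (S K) (le_n _)); lia.
        -- specialize (Hg p ltac:(lia)); lia.
      * exists p, q. split; [lia|]. unfold h in Hh.
        destruct (Nat.eq_dec (g p) K), (Nat.eq_dec (g q) K); try congruence.
        -- exfalso; apply Hno; exists q; split; [lia|congruence].
        -- exfalso; apply Hno; exists p; split; [lia|congruence].
Qed.

Fixpoint code (n a : nat) (m : nat -> nat) : nat :=
  match a with O => O | S a' => (code n a' m + m a' * n ^ a')%nat end.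

Lemma code_lt n a m : (forall l, (l < a)%nat -> (m l < n)%nat) -> (code n a m < n ^ a)%nat.
Proof.
  induction a; intros H; simpl; [lia|].
  assert (IH := IHa ltac:(intros; apply H; lia)).
  assert (Ha := H a (le_n _)).
  assert ((m a + 1) * n ^ a <= n * n ^ a)%nat by (apply Nat.mul_le_mono_r; lia).
  nia.
Qed.

Lemma code_inj n a m m' : (forall l, (l < a)%nat -> (m l < n)%nat) ->
  (forall l, (l < a)%nat -> (m' l < n)%nat) -> code n a m = code n a m' ->
  forall l, (l < a)%nat -> m l = m' l.
Proof.
  induction a; intros H H' E l Hl; [lia|]. simpl in E.
  assert (c1 := code_lt n a m ltac:(intros; apply H; lia)).
  assert (c2 := code_lt n a m' ltac:(intros; apply H'; lia)).
  assert (Pnz : (n ^ a <> 0)%nat) by lia.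
  assert (Ea : m a = m' a).
  { assert (E2 : ((code n a m + m a * n ^ a) / n ^ a = (code n a m' + m' a * n ^ a) / n ^ a)%nat) by (rewrite E; reflexivity).
    rewrite !Nat.div_add in E2 by exact Pnz.
    rewrite !Nat.div_small in E2 by assumption. lia. }
  destruct (Nat.eq_dec l a) as [->|Hne]; [exact Ea|].
  apply IHa; try (intros; first [apply H | apply H']; lia); try lia.
Qed.

Lemma gap n L (D : nat -> R) l : 0 < L -> (l < n)%nat -> D l = 0 ->
  exists t, (t < n)%nat /\ forall j, (j < n)%nat ->
    ~ (2 * L * INR t < D j /\ D j <= 2 * L * INR (S t)).
Proof.
  intros HL Hl HD. apply NNPP; intro Hc.
  assert (H1 : forall t, exists j, (t < n)%nat -> (j < n)%nat /\
      (2 * L * INR t < D j /\ D j <= 2 * L * INR (S t))).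
  { intro t. destruct (classic (t < n)%nat) as [Ht|Ht].
    - apply NNPP; intro Hne. apply Hc. exists t. split; auto.
      intros j Hj Hj2. apply Hne. exists j. auto.
    - exists 0%nat. intro; contradiction. }
  set (g := fun t => proj1_sig (constructive_indefinite_description _ (H1 t))).
  assert (Hg : forall t, (t < n)%nat -> (g t < n)%nat /\
      (2 * L * INR t < D (g t) /\ D (g t) <= 2 * L * INR (S t))).
  { intros t Ht. unfold g. destruct (constructive_indefinite_description _ (H1 t)) as [j Hj].
    simpl. auto. }
  assert (Hgl : forall t, (t < n)%nat -> g t <> l).
  { intros t Ht E. destruct (Hg t Ht) as [_ [H2 _]]. rewrite E, HD in H2.
    pose proof (pos_INR t). assert (0 <= 2 * L * INR t) by (apply Rmult_le_pos; lra). lra. }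
  set (h := fun t => if Nat.ltb (g t) l then g t else (g t - 1)%nat).
  destruct (php (n - 1) h) as [p [q [Hpq Hh]]].
  { intros p Hp. unfold h. assert (Hpn : (p < n)%nat) by lia.
    destruct (Hg p Hpn) as [Hb _]. assert (Hne := Hgl p Hpn).
    destruct (Nat.ltb_spec (g p) l); lia. }
  assert (Hpn : (p < n)%nat) by lia. assert (Hqn : (q < n)%nat) by lia.
  assert (Egpq : g p = g q).
  { unfold h in Hh. assert (Hp' := Hgl p Hpn). assert (Hq' := Hgl q Hqn).
    destruct (Nat.ltb_spec (g p) l), (Nat.ltb_spec (g q) l); lia. }
  destruct (Hg p Hpn) as [_ [_ Hp2]]. destruct (Hg q Hqn) as [_ [Hq1 _]].
  rewrite <- Egpq in Hq1.
  assert (INR (S p) <= INR q) by (apply le_INR; lia).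
  assert (2 * L * INR (S p) <= 2 * L * INR q) by (apply Rmult_le_compat_l; lra).
  lra.
Qed.

Lemma nonsep_close n d L (x y : config) l : 0 < L -> (l < n)%nat ->
  ~ (exists J, Jsep n d L y x J) ->
  exists m, (m < n)%nat /\ Dn d (zr y l) (zr x m) < 2 * L * INR n.
Proof.
  intros HL Hl Hns.
  set (Dj := fun j => Dn d (zr y j) (zr y l)).
  destruct (gap n L Dj l HL Hl (Dn_self d (zr y l))) as [t [Ht Hgap]].
  assert (HJ : ~ Jsep n d L y x (fun j => Dj j <= 2 * L * INR t))
    by (intro; apply Hns; eauto).
  unfold Jsep in HJ. apply not_and_or in HJ. destruct HJ as [HJ|HJ].
  - exfalso; apply HJ; exists l; split; auto. unfold Dj; rewrite Dn_self.
    pose proof (pos_INR t). apply Rmult_le_pos; lra.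
  - apply not_all_ex_not in HJ. destruct HJ as [z Hz]. apply NNPP in Hz.
    destruct Hz as [[j [Hj [HJj Hzj]]] [[j' [Hj' [HJj' Hzj']]] | [m [Hm Hzm]]]].
    + exfalso. pose proof (overlap d L _ _ z Hzj' Hzj) as Ho.
      pose proof (Hgap j' Hj') as Hg.
      pose proof (Dn_tri d (zr y j') (zr y j) (zr y l)) as Ht3.
      fold (Dj j') in Ht3. fold (Dj j) in Ht3.
      rewrite S_INR in Hg.
      assert (E : 2 * L * (INR t + 1) = 2 * L * INR t + 2 * L) by ring.
      rewrite E in Hg. apply Hg. split; lra.
    + exists m. split; auto.
      pose proof (overlap d L _ _ z Hzj Hzm) as Ho.
      pose proof (Dn_tri d (zr y l) (zr y j) (zr x m)) as Ht3.
      rewrite (Dn_sym d (zr y l) (zr y j)) in Ht3. fold (Dj j) in Ht3.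
      assert (INR (S t) <= INR n) by (apply le_INR; lia).
      rewrite S_INR in H.
      assert (2 * L * (INR t + 1) <= 2 * L * INR n) by (apply Rmult_le_compat_l; lra).
      lra.
Qed.

Lemma core n d N L (f : nat -> config) : 0 < L -> (1 <= n)%nat -> (n <= N)%nat ->
  (forall p q, (p < kappa n + 2)%nat -> (q < kappa n + 2)%nat -> p <> q ->
     normn n d (diffp (zr (f p)) (zr (f q))) > 7 * INR N * L) ->
  exists p, (1 <= p <= kappa n + 1)%nat /\ exists J, Jsep n d L (f p) (f 0%nat) J.
Proof.
  intros HL Hn HnN Hdist. apply NNPP; intro Hc.
  assert (H1 : forall p l, exists m, (1 <= p <= kappa n + 1)%nat -> (l < n)%nat ->
     (m < n)%nat /\ Dn d (zr (f p) l) (zr (f 0%nat) m) < 2 * L * INR n).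
  { intros p l. destruct (classic ((1 <= p <= kappa n + 1)%nat /\ (l < n)%nat)) as [[Hp Hl]|Hno].
    - assert (Hns : ~ exists J, Jsep n d L (f p) (f 0%nat) J) by (intro; apply Hc; eauto).
      destruct (nonsep_close n d L (f 0%nat) (f p) l HL Hl Hns) as [m Hm]. exists m; auto.
    - exists 0%nat; intros; exfalso; auto. }
  set (M := fun p l => proj1_sig (constructive_indefinite_description _ (H1 p l))).
  assert (HM : forall p l, (1 <= p <= kappa n + 1)%nat -> (l < n)%nat ->
     (M p l < n)%nat /\ Dn d (zr (f p) l) (zr (f 0%nat) (M p l)) < 2 * L * INR n).
  { intros p l Hp Hl. unfold M. destruct (constructive_indefinite_description _ (H1 p l)) as [m Hm].
    simpl. auto. }
  set (c := fun p => code n n (M (S p))).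
  destruct (php (kappa n) c) as [p [q [Hpq Hcq]]].
  { intros p Hp. unfold c, kappa. apply code_lt. intros l Hl. apply HM; lia. }
  assert (Heq : forall l, (l < n)%nat -> M (S p) l = M (S q) l).
  { apply (code_inj n n); [intros; apply HM; lia | intros; apply HM; lia | exact Hcq]. }
  specialize (Hdist (S p) (S q) ltac:(lia) ltac:(lia) ltac:(lia)).
  assert (Hn1 : 1 <= INR n) by (apply (le_INR 1); lia).
  assert (HnN' : INR n <= INR N) by (apply le_INR; lia).
  assert (Hlt : normn n d (diffp (zr (f (S p))) (zr (f (S q)))) < 4 * L * INR n).
  { apply maxi_lt; [nra|]. intros l Hl.
    change (Dn d (zr (f (S p)) l) (zr (f (S q)) l) < 4 * L * INR n).
    destruct (HM (S p) l ltac:(lia) Hl) as [_ A].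
    destruct (HM (S q) l ltac:(lia) Hl) as [_ B].
    rewrite <- Heq in B by exact Hl.
    pose proof (Dn_tri d (zr (f (S p)) l) (zr (f 0%nat) (M (S p) l)) (zr (f (S q)) l)).
    rewrite (Dn_sym d (zr (f 0%nat) _) (zr (f (S q)) l)) in H. lra. }
  nra.
Qed.

Lemma scale_pos L0 k : 3 < L0 -> 0 < scale L0 k.
Proof.
  intros H. induction k; simpl; [lra|].
  destruct (base_Int_part (Rpower (scale L0 k) (3 / 2))) as [_ B].
  assert (0 < Rpower (scale L0 k) (3 / 2)) by (unfold Rpower; apply exp_pos).
  lra.
Qed.

Theorem mainTheorem13 (d N n k : nat) (L0 r0 E : R) (sing : singT) (u : config) :
  (1 <= d)%nat -> 3 < L0 -> (1 <= n)%nat -> (n <= N)%nat ->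
  (M_ge sing N n d L0 k E u (kappa n + 2) -> Msep_ge sing N n d L0 k E u 2) /\
  (MPI_ge sing N n d r0 L0 k E u (kappa n + 2) -> MPIsep_ge sing N n d r0 L0 k E u 2).
Proof.
  intros Hd HL0 Hn HnN. assert (HL := scale_pos L0 k HL0). split.
  - intros [f [Hf Hdist]].
    destruct (core n d N (scale L0 k) f HL Hn HnN Hdist) as [p [Hp HJ]].
    exists (fun i => if Nat.eqb i 0 then f 0%nat else f p). split.
    + intros i Hi. destruct i as [|[|]]; simpl.
      * destruct (Hf 0%nat ltac:(lia)) as [A [B _]]; auto.
      * destruct (Hf p ltac:(lia)) as [A [B _]]; auto.
      * lia.
    + intros i j Hi Hj Hij. destruct i as [|[|]], j as [|[|]]; try lia; simpl.
      * split; [apply Hdist; lia| right; exact HJ].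
      * split; [apply Hdist; lia| left; exact HJ].
  - intros [f [Hf Hdist]].
    destruct (core n d N (scale L0 k) f HL Hn HnN Hdist) as [p [Hp HJ]].
    exists (fun i => if Nat.eqb i 0 then f 0%nat else f p). split.
    + intros i Hi. destruct i as [|[|]]; simpl.
      * apply Hf; lia.
      * apply Hf; lia.
      * lia.
    + intros i j Hi Hj Hij. destruct i as [|[|]], j as [|[|]]; try lia; simpl.
      * split; [apply Hdist; lia| right; exact HJ].
      * split; [apply Hdist; lia| left; exact HJ].
Qed.
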